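(* Let $\mathcal H$ be a complex Hilbert space, $U\in\mathcal B(\mathcal H)$ unitary, and $\mathcal K\subset\mathcal H$ a closed subspace with orthogonal projection $P_{\mathcal K}$. Put $S=(I-P_{\mathcal K})U$, let $\Theta_S$ be the characteristic function of $S$ (viewed as a map $U^*(\mathcal K)\to\mathcal K$, see context), and let $\tilde U:U^*(\mathcal K)\to\mathcal K$ be the restriction of $U$ to $U^*(\mathcal K)$. Then for every $z$ in the open unit disc $\mathbb D$ and every $k\in\mathcal K$, $$\big\langle (U+zI)(U-zI)^{-1}k,\,k\big\rangle=\big\langle (\tilde U+\Theta_S(z))(\tilde U-\Theta_S(z))^{-1}k,\,k\big\rangle .$$
   Context: For a contraction $T$ on a Hilbert space, $D_T=(I-T^*T)^{1/2}$, $D_{T^*}=(I-TT^* )^{1/2}$, $\mathcal D_T=\overline{D_T\mathcal H}$, $\mathcal D_{T^*}=\overline{D_{T^*}\mathcal H}$, and the characteristic function is $\Theta_T(z)=\big(-T+zD_{T^*}(I-zT^* )^{-1}D_T\big)|_{\mathcal D_T}:\mathcal D_T\to\mathcal D_{T^*}$, $z\in\mathbb D$. For $S=(I-P_{\mathcal K})U$ one has $\mathcal D_S=U^*(\mathcal K)$ and $\mathcal D_{S^*}=\mathcal K$, so $\Theta_S(z):U^*(\mathcal K)\to\mathcal K$, and $\Theta_S(0)=0$. The operator $(\tilde U+\Theta_S(z))(\tilde U-\Theta_S(z))^{-1}$ acts on $\mathcal K$. *)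

(* Defs.v *)
From HB Require Import structures.
From mathcomp Require Import all_boot all_order all_algebra.
From mathcomp Require Import complex reals.
From Stdlib Require Import ClassicalEpsilon.
Set Implicit Arguments. Unset Strict Implicit. Unset Printing Implicit Defensive.
Import Order.TTheory GRing.Theory Num.Theory.
Local Open Scope ring_scope.

Section Hilbert.
Variables (R : realType) (H : lmodType R[i]) (ip : H -> H -> R[i]).

Definition hnorm (x : H) : R := Num.sqrt (complex.Re (ip x x)).

Definition cauchy_seq (u : nat -> H) : Prop :=
  forall e : R, 0 < e -> exists N : nat, forall m n : nat,
    (N <= m)%N -> (N <= n)%N -> hnorm (u m - u n) < e.

Definition seq_converges_to (u : nat -> H) (l : H) : Prop :=
  forall e : R, 0 < e -> exists N : nat, forall n : nat,
    (N <= n)%N -> hnorm (u n - l) < e.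

Definition is_hilbert : Prop :=
  [/\ (forall (a : R[i]) (x y w : H), ip (a *: x + y) w = a * ip x w + ip y w),
      (forall x y : H, ip y x = conjc (ip x y)),
      (forall x : H, 0 <= ip x x),
      (forall x : H, ip x x = 0 -> x = 0) &
      (forall u : nat -> H, cauchy_seq u -> exists l, seq_converges_to u l)].

Definition linear_op (T : H -> H) : Prop :=
  forall (a : R[i]) (x y : H), T (a *: x + y) = a *: T x + T y.

Definition bounded_op (T : H -> H) : Prop :=
  linear_op T /\ exists M : R, forall x : H, hnorm (T x) <= M * hnorm x.

Definition adj (T : H -> H) : H -> H :=
  epsilon (inhabits (fun x : H => x))
    (fun A : H -> H => forall x y : H, ip (T x) y = ip x (A y)).

Definition unitary (U : H -> H) : Prop :=
  [/\ bounded_op U, (forall x, adj U (U x) = x) & (forall x, U (adj U x) = x)].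

Definition closed_subspace (K : H -> Prop) : Prop :=
  [/\ K 0, (forall (a : R[i]) x y, K x -> K y -> K (a *: x + y)) &
      (forall (u : nat -> H) (l : H), (forall n, K (u n)) ->
          seq_converges_to u l -> K l)].

Definition orth_proj (K : H -> Prop) (x : H) : H :=
  epsilon (inhabits 0)
    (fun k : H => K k /\ forall w : H, K w -> ip (x - k) w = 0).

Definition positive_op (B : H -> H) : Prop :=
  bounded_op B /\ forall x : H, 0 <= ip (B x) x.

Definition op_sqrt (A : H -> H) : H -> H :=
  epsilon (inhabits (fun x : H => x))
    (fun B : H -> H => positive_op B /\ forall x, B (B x) = A x).

Definition op_inv (A : H -> H) (y : H) : H :=
  epsilon (inhabits 0) (fun x : H => A x = y).

Definition op_inv_on (D : H -> Prop) (A : H -> H) (y : H) : H :=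
  epsilon (inhabits 0) (fun x : H => D x /\ A x = y).

Definition defect (T : H -> H) : H -> H :=
  op_sqrt (fun x => x - adj T (T x)).
Definition defect_adj (T : H -> H) : H -> H :=
  op_sqrt (fun x => x - T (adj T x)).

(* characteristic function Theta_T(z) = -T + z D_{T^ *} (I - z T^ * )^{-1} D_T,
   as a map on H (to be restricted to \mathcal D_T) *)
Definition char_fun (T : H -> H) (z : R[i]) (x : H) : H :=
  - T x + z *: defect_adj T (op_inv (fun y => y - z *: adj T y) (defect T x)).

End Hilbert.

(* Main.v *)
Require Import Defs.
From HB Require Import structures.
From mathcomp Require Import all_boot all_order all_algebra.
From mathcomp Require Import complex reals.
Import Order.TTheory GRing.Theory Num.Theory.
Local Open Scope ring_scope.
From HB Require Import structures.
From mathcomp Require Import all_boot all_order all_algebra.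
From mathcomp Require Import complex reals ring lra.
From mathcomp Require classical_sets.
From Stdlib Require Import Classical ClassicalEpsilon FunctionalExtensionality.
Import Order.TTheory GRing.Theory Num.Theory.
Local Open Scope ring_scope.

Section Hil.
Variables (R : realType) (H : lmodType R[i]) (ip : H -> H -> R[i]).
Hypothesis hH : is_hilbert ip.

Lemma ip_lin a x y w : ip (a *: x + y) w = a * ip x w + ip y w.
Proof. by case: hH => h *; apply: h. Qed.
Lemma ip_sym x y : ip y x = conjc (ip x y).
Proof. by case: hH => _ h *; apply: h. Qed.
Lemma ip_pos x : 0 <= ip x x.
Proof. by case: hH => _ _ h *; apply: h. Qed.
Lemma ip_def x : ip x x = 0 -> x = 0.
Proof. by case: hH => _ _ _ h *; apply: h. Qed.

Lemma conjD (a b : R[i]) : conjc (a + b) = conjc a + conjc b.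
Proof. exact: rmorphD. Qed.
Lemma conjM (a b : R[i]) : conjc (a * b) = conjc a * conjc b.
Proof. exact: rmorphM. Qed.
Lemma conjN (a : R[i]) : conjc (- a) = - conjc a.
Proof. exact: rmorphN. Qed.
Lemma conjK (a : R[i]) : conjc (conjc a) = a.
Proof. exact: conjcK. Qed.

Lemma ip0l w : ip 0 w = 0.
Proof.
have := ip_lin 1 0 0 w; rewrite scale1r addr0 mul1r => h.
by apply: (addrI (ip 0 w)); rewrite addr0 -h.
Qed.
Lemma ipDl x y w : ip (x + y) w = ip x w + ip y w.
Proof. by have := ip_lin 1 x y w; rewrite scale1r mul1r. Qed.
Lemma ipZl a x w : ip (a *: x) w = a * ip x w.
Proof. by have := ip_lin a x 0 w; rewrite addr0 ip0l addr0. Qed.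
Lemma ipNl x w : ip (- x) w = - ip x w.
Proof. by rewrite -scaleN1r ipZl mulN1r. Qed.
Lemma ipBl x y w : ip (x - y) w = ip x w - ip y w.
Proof. by rewrite ipDl ipNl. Qed.
Lemma ip0r w : ip w 0 = 0.
Proof. by rewrite ip_sym ip0l conjc0. Qed.
Lemma ipDr x y w : ip w (x + y) = ip w x + ip w y.
Proof. by rewrite ip_sym ipDl conjD -!ip_sym. Qed.
Lemma ipZr a x w : ip w (a *: x) = conjc a * ip w x.
Proof. by rewrite ip_sym ipZl conjM -ip_sym. Qed.
Lemma ipNr x w : ip w (- x) = - ip w x.
Proof. by rewrite ip_sym ipNl conjN -ip_sym. Qed.
Lemma ipBr x y w : ip w (x - y) = ip w x - ip w y.
Proof. by rewrite ipDr ipNr. Qed.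

Definition nn x : R := complex.Re (ip x x).
Lemma nn_ge0 x : 0 <= nn x.
Proof. by have := ip_pos x; rewrite lecE /= => /andP[]. Qed.
Lemma ip_nn x : ip x x = (nn x)%:C%C.
Proof.
have := ip_pos x; rewrite lecE /= => /andP[/eqP h _].
by rewrite /nn; case: (ip x x) h => a b /= ->.
Qed.
Lemma nn_eq0 x : nn x = 0 -> x = 0.
Proof. by move=> h; apply: ip_def; rewrite ip_nn h. Qed.
Lemma nn0 : nn 0 = 0.
Proof. by rewrite /nn ip0l. Qed.
Lemma hnormE x : hnorm ip x = Num.sqrt (nn x).
Proof. by []. Qed.

Lemma ReD (a b : R[i]) : complex.Re (a + b) = complex.Re a + complex.Re b.
Proof. by case: a; case: b. Qed.
Lemma ReN (a : R[i]) : complex.Re (- a) = - complex.Re a.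
Proof. by case: a. Qed.
Lemma ReB (a b : R[i]) : complex.Re (a - b) = complex.Re a - complex.Re b.
Proof. by rewrite ReD ReN. Qed.
Lemma ReJ (a : R[i]) : complex.Re (conjc a) = complex.Re a.
Proof. by case: a. Qed.
Lemma ReCM (t : R) (a : R[i]) : complex.Re (t%:C%C * a) = t * complex.Re a.
Proof. by case: a => ? ? /=; rewrite mul0r subr0. Qed.
Lemma conjC (t : R) : conjc (t%:C%C) = t%:C%C.
Proof. exact: conjc_real. Qed.

Lemma ReC (t : R) : complex.Re (t%:C%C) = t. Proof. by []. Qed.

Definition ns (a : R[i]) : R := complex.Re (a * conjc a).
Lemma ns_C a : a * conjc a = (ns a)%:C%C.
Proof. by case: a => p q; rewrite /ns; simpc; rewrite /=; congr (_ +i* _)%C; ring. Qed.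
Lemma ns_ge0 a : 0 <= ns a.
Proof. by case: a => p q; rewrite /ns /= mulrN opprK addr_ge0 // -expr2 sqr_ge0. Qed.
Lemma ns_eq0 a : ns a = 0 -> a = 0.
Proof.
case: a => p q; rewrite /ns; simpc; rewrite /= => /eqP.
by rewrite -!expr2 paddr_eq0 ?sqr_ge0 // !sqrf_eq0 => /andP[/eqP-> /eqP->].
Qed.

Lemma nnD x y : nn (x + y) = nn x + nn y + 2 * complex.Re (ip x y).
Proof.
rewrite /nn ipDl !ipDr !ReD (ip_sym x y) ReJ; lra.
Qed.
Lemma nnZ a x : nn (a *: x) = ns a * nn x.
Proof. by rewrite /nn ipZl ipZr mulrA ns_C ip_nn /= !mul0r !subr0. Qed.
Lemma nnN x : nn (- x) = nn x.
Proof. by rewrite /nn ipNl ipNr opprK. Qed.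
Lemma ip_scaleC (t : R) x y : ip x (t%:C%C *: y) = t%:C%C * ip x y.
Proof. by rewrite ipZr conjC. Qed.
Lemma ns_real (t : R) : ns (t%:C%C) = t ^+ 2.
Proof. by rewrite /ns conjC /= !mul0r subr0 expr2. Qed.

Lemma CS_re x y : complex.Re (ip x y) ^+ 2 <= nn x * nn y.
Proof.
have [y0|ny] := eqVneq (nn y) 0.
  by rewrite y0 (nn_eq0 _ y0) ip0r /= expr0n /= mulr0.
have nyp : 0 < nn y by rewrite lt_def ny nn_ge0.
set r := complex.Re (ip x y).
set t := - r / nn y.
have := nn_ge0 (x + t%:C%C *: y).
rewrite nnD nnZ ns_real ip_scaleC ReCM -/r => h.
rewrite -subr_ge0.
have -> : nn x * nn y - r ^+ 2 = nn y * (nn x + t ^+ 2 * nn y + 2 * (t * r)).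
  by rewrite /t; field; rewrite ny.
by apply: mulr_ge0 => //; apply: ltW.
Qed.

Lemma CS x y : ns (ip x y) <= nn x * nn y.
Proof.
set c := ip x y.
have := CS_re x (c *: y).
rewrite nnZ ipZr mulrC ns_C ReC -/c => h.
have := ns_ge0 c; rewrite le_eqVlt => /orP[/eqP <-|cp].
  by rewrite mulr_ge0 // nn_ge0.
by move: h; rewrite expr2 mulrCA ler_pM2l.
Qed.

Local Notation hn := (hnorm ip).
Lemma hnE x : hn x = Num.sqrt (nn x). Proof. by []. Qed.
Lemma hn_ge0 x : 0 <= hn x. Proof. exact: sqrtr_ge0. Qed.
Lemma hn_sq x : hn x ^+ 2 = nn x. Proof. by rewrite hnE sqr_sqrtr // nn_ge0. Qed.

Lemma Re_le x y : complex.Re (ip x y) <= hn x * hn y.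
Proof.
have := CS_re x y; rewrite -(hn_sq x) -(hn_sq y) => h.
have ab : 0 <= hn x * hn y by rewrite mulr_ge0 // hn_ge0.
apply: le_trans (ler_norm _) _.
by rewrite -sqrtr_sqr -(ger0_norm ab) -sqrtr_sqr ler_sqrt ?sqr_ge0 // exprMn.
Qed.

Lemma hnD x y : hn (x + y) <= hn x + hn y.
Proof.
have h1 : nn (x + y) <= (hn x + hn y) ^+ 2.
  rewrite nnD -(hn_sq x) -(hn_sq y); have := Re_le x y; nra.
rewrite hnE -(@ger0_norm _ (hn x + hn y)); last by rewrite addr_ge0 // hn_ge0.
by rewrite -sqrtr_sqr ler_sqrt // sqr_ge0.
Qed.
Lemma hnN x : hn (- x) = hn x. Proof. by rewrite !hnE nnN. Qed.
Lemma hnB x y : hn (x - y) = hn (y - x). Proof. by rewrite -hnN opprB. Qed.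
Lemma hnZ a x : hn (a *: x) = Num.sqrt (ns a) * hn x.
Proof. by rewrite !hnE nnZ sqrtrM // ns_ge0. Qed.
Lemma hn_lt x e : 0 < e -> (hn x < e) = (nn x < e ^+ 2).
Proof.
move=> e0; have e2 : 0 < e ^+ 2 by rewrite exprn_gt0.
rewrite hnE -(ltr_sqrt _ e2) sqrtr_sqr ger0_norm //; exact: ltW.
Qed.
Lemma hn_eq0 x : hn x = 0 -> x = 0.
Proof. by move=> h; apply: nn_eq0; rewrite -hn_sq h expr0n. Qed.
Lemma hn0 : hn 0 = 0. Proof. by rewrite hnE nn0 sqrtr0. Qed.

Lemma small0 (a : R) : 0 <= a -> (forall e, 0 < e -> a < e) -> a = 0.
Proof.
move=> a0 h; have [ap|] := ltP 0 a; last by move=> ?; apply/eqP; rewrite eq_le a0 andbT.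
have := h (a / 2%:R) (divr_gt0 ap (ltr0Sn _ 1)); lra.
Qed.

Lemma archi (c : R) : 0 < c -> exists N : nat, forall n, (N <= n)%N -> (n.+1%:R)^-1 < c.
Proof.
move=> c0; exists (Num.trunc (c^-1)) => n hn.
have h1 := truncnS_gt (c^-1).
have h2 : (Num.trunc c^-1).+1%:R <= n.+1%:R :> R by rewrite ler_nat.
rewrite -[c]invrK ltf_pV2 ?posrE ?invr_gt0 //; lra.
Qed.

Section Lin.
Variable T : H -> H.
Hypothesis hT : linear_op T.
Lemma linD x y : T (x + y) = T x + T y.
Proof. by have := hT 1 x y; rewrite !scale1r. Qed.
Lemma lin0 : T 0 = 0.
Proof. by have := linD 0 0; rewrite addr0 => h; apply: (addrI (T 0)); rewrite addr0 -h. Qed.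
Lemma linZ a x : T (a *: x) = a *: T x.
Proof. by have := hT a x 0; rewrite !addr0 lin0 addr0. Qed.
Lemma linN x : T (- x) = - T x.
Proof. by rewrite -scaleN1r linZ scaleN1r. Qed.
Lemma linB x y : T (x - y) = T x - T y.
Proof. by rewrite linD linN. Qed.
End Lin.

Lemma conv_uniq u a b : seq_converges_to ip u a -> seq_converges_to ip u b -> a = b.
Proof.
move=> ha hb; apply/eqP; rewrite -subr_eq0; apply/eqP; apply: hn_eq0.
apply: small0; first exact: hn_ge0.
move=> e e0; have e2 : 0 < e / 2%:R by rewrite divr_gt0.
have [N1 h1] := ha _ e2; have [N2 h2] := hb _ e2.
have := h1 (maxn N1 N2) (leq_maxl _ _); have := h2 (maxn N1 N2) (leq_maxr _ _).
set v := u _ => p q.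
have : hn (a - b) <= hn (a - v) + hn (v - b).
  by apply: le_trans _ (hnD _ _); rewrite addrA subrK.
rewrite (hnB a v); lra.
Qed.

Lemma conv_cauchy u a : seq_converges_to ip u a -> cauchy_seq ip u.
Proof.
move=> ha e e0; have e2 : 0 < e / 2%:R by rewrite divr_gt0.
have [N h] := ha _ e2; exists N => m n hm hn'.
have := h m hm; have := h n hn'.
have : hn (u m - u n) <= hn (u m - a) + hn (a - u n).
  by apply: le_trans _ (hnD _ _); rewrite addrA subrK.
rewrite (hnB a); lra.
Qed.

Lemma conv_lin T M u a : linear_op T -> (forall x, hn (T x) <= M * hn x) ->
  seq_converges_to ip u a -> seq_converges_to ip (fun n => T (u n)) (T a).
Proof.
move=> hT hM ha e e0.
have M1 : 0 < `|M| + 1 by rewrite ltr_wpDl.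
have [N h] := ha _ (divr_gt0 e0 M1); exists N => n hn'.
rewrite -linB //; apply: le_lt_trans (hM _) _.
have := h n hn'; have := hn_ge0 (u n - a); rewrite ltr_pdivlMr // => p q.
have := ler_norm M; nra.
Qed.

Lemma conv_add u v a b : seq_converges_to ip u a -> seq_converges_to ip v b ->
  seq_converges_to ip (fun n => u n + v n) (a + b).
Proof.
move=> ha hb e e0; have e2 : 0 < e / 2%:R by rewrite divr_gt0.
have [N1 h1] := ha _ e2; have [N2 h2] := hb _ e2.
exists (maxn N1 N2) => n hn'.
have := h1 n (leq_trans (leq_maxl _ _) hn'); have := h2 n (leq_trans (leq_maxr _ _) hn').
have -> : u n + v n - (a + b) = (u n - a) + (v n - b) by rewrite opprD addrACA.
have := hnD (u n - a) (v n - b); lra.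
Qed.

Lemma nsM a b : ns (a * b) = ns a * ns b.
Proof.
rewrite /ns conjM mulrACA (ns_C a) (ns_C b).
by rewrite ReCM.
Qed.

Lemma parallel a b : nn (a - b) + nn (a + b) = 2%:R * nn a + 2%:R * nn b.
Proof. rewrite !nnD nnN ipNr ReN; lra. Qed.

Lemma ns2 : ns (2%:R) = 4%:R.
Proof.
have -> : (2%:R : R[i]) = (2%:R : R)%:C%C by rewrite (rmorph_nat (real_complex R)).
by rewrite ns_real; rewrite expr2 -natrM.
Qed.

Section Proj.
Variable K : H -> Prop.
Hypothesis hK : closed_subspace ip K.
Lemma K0 : K 0. Proof. by case: hK. Qed.
Lemma Klin a x y : K x -> K y -> K (a *: x + y). Proof. by case: hK => _ h _; apply: h. Qed.
Lemma Kcl u l : (forall n, K (u n)) -> seq_converges_to ip u l -> K l.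
Proof. by case: hK => _ _ h; apply: h. Qed.
Lemma KZ a x : K x -> K (a *: x). Proof. by move=> kx; rewrite -[_ *: _]addr0; apply: Klin => //; exact: K0. Qed.
Lemma KD x y : K x -> K y -> K (x + y). Proof. by move=> *; rewrite -[x]scale1r; apply: Klin. Qed.

Lemma proj_exists x : exists p, K p /\ forall w, K w -> ip (x - p) w = 0.
Proof.
pose D : classical_sets.set R := fun r => exists k, K k /\ r = - nn (x - k).
have Dub : classical_sets.ubound D 0.
  by move=> r [k [_ ->]]; rewrite oppr_le0 nn_ge0.
have hD : classical_sets.has_sup D.
  by split; [exists (- nn (x - 0)); exists 0; split => //; exact: K0 | exists 0].
set d := - sup D.
have dlow : forall k, K k -> d <= nn (x - k).
  move=> k kk; have := sup_upper_bound hD (ex_intro _ k (conj kk (erefl (- nn (x - k))))).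
  rewrite /d; lra.
have d0 : 0 <= d.
  have := ge_sup (proj1 hD) Dub; rewrite /d; lra.
have happ : forall n : nat, exists k, K k /\ nn (x - k) < d + (n.+1%:R)^-1.
  move=> n; have ep : 0 < (n.+1%:R : R)^-1 by rewrite invr_gt0.
  have [r [k [kk ->]] hr] := sup_adherent ep hD.
  exists k; split => //; move: hr; rewrite /d -subr_gt0 => hr; rewrite -subr_gt0; move: hr; congr (0 < _); ring.
pose kn n := epsilon (inhabits 0) (fun k => K k /\ nn (x - k) < d + (n.+1%:R)^-1).
have hkn : forall n, K (kn n) /\ nn (x - kn n) < d + (n.+1%:R)^-1.
  by move=> n; apply: (epsilon_spec (inhabits 0) _ (happ n)).
have hcau : cauchy_seq ip kn.
  move=> e e0.
  have e4 : 0 < e ^+ 2 / 4%:R by rewrite divr_gt0 // exprn_gt0.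
  have [N hN] := archi _ e4.
  exists N => m n hm hn'.
  rewrite hn_lt //.
  have [km1 km2] := hkn m; have [kn1 kn2] := hkn n.
  have hmid : K ((2%:R : R[i])^-1 *: (kn m + kn n)) by apply: KZ; apply: KD.
  have := dlow _ hmid.
  have := parallel (x - kn n) (x - kn m).
  have -> : x - kn n - (x - kn m) = kn m - kn n.
    by rewrite opprB addrC addrA subrK.
  have -> : x - kn n + (x - kn m) = (2%:R : R[i]) *: (x - (2%:R : R[i])^-1 *: (kn m + kn n)).
    rewrite scalerBr scalerA mulfV ?pnatr_eq0 // scale1r scaler_nat mulr2n.
    by rewrite opprD addrACA (addrC (- kn n)).
  rewrite nnZ ns2.
  have := hN m hm; have := hN n hn'.
  have := (ltr0Sn R m); have := (ltr0Sn R n).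
  set a := (m.+1%:R)^-1; set b := (n.+1%:R)^-1.
  set q := nn (x - _).
  move=> _ _ ha hb hpar hq.
  have : nn (kn m - kn n) <= 2%:R * a + 2%:R * b.
    move: hpar hq km2 kn2; rewrite -/a -/b; lra.
  move: ha hb; rewrite !ltr_pdivlMr //; lra.
have [p hp] := (match hH with And5 _ _ _ _ c => c end) kn hcau.
have Kp : K p by apply: (Kcl kn) => // n; case: (hkn n).
have hmin : nn (x - p) <= d.
  rewrite leNgt; apply/negP => hgt.
  set g := hn (x - p).
  have g0 : 0 <= g by apply: hn_ge0.
  have hg2 : g ^+ 2 = nn (x - p) by rewrite hn_sq.
  set eta := nn (x - p) - d.
  have eta0 : 0 < eta by rewrite /eta subr_gt0.
  have [N1 hN1] := archi _ (divr_gt0 eta0 (ltr0Sn R 3)).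
  have g1 : 0 < eta / (4%:R * (g + 1)) by rewrite divr_gt0 // mulr_gt0 // ltr_wpDl.
  have [N2 hN2] := hp _ g1.
  set n := maxn N1 N2.
  have h1 := hN1 n (leq_maxl _ _); have h2 := hN2 n (leq_maxr _ _).
  have [_ h3] := hkn n.
  have h4 : g <= hn (x - kn n) + hn (kn n - p).
    by apply: le_trans _ (hnD _ _); rewrite addrA subrK.

  set dl := hn (kn n - p) in h2 h4.
  set a := (n.+1%:R)^-1 in h1 h3.
  have dl0 : 0 <= dl by apply: hn_ge0.
  have hx : hn (x - kn n) ^+ 2 < d + a by rewrite hn_sq.
  have hx0 : 0 <= hn (x - kn n) by apply: hn_ge0.
  set t := hn (x - kn n) in hx hx0 h4.
  move: h1 h2; rewrite ltr_pdivlMr // ltr_pdivlMr; last by rewrite mulr_gt0 // ltr_wpDl.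
  move=> h1 h2.
  have h7 : g ^+ 2 - 2%:R * g * dl <= t ^+ 2.
    by case: (lerP dl g) => hh; nra.
  have : eta < a + 2%:R * g * dl by rewrite /eta -hg2; nra.
  nra.
exists p; split => // w kw.
have [w0|nw] := eqVneq (nn w) 0; first by rewrite (nn_eq0 _ w0) ip0r.
have nwp : 0 < nn w by rewrite lt_def nw nn_ge0.
set c := ip (x - p) w.
set lam := (nn w)^-1.
have kp' : K ((lam%:C%C * c) *: w + p) by apply: Klin.
have := dlow _ kp'.
have -> : x - ((lam%:C%C * c) *: w + p) = (x - p) + - ((lam%:C%C * c) *: w).
  by rewrite opprD addrA addrAC.
rewrite nnD nnN nnZ ipNr ReN ipZr -/c conjM conjC -mulrA (mulrC (conjc c)) ns_C ReCM.
rewrite nsM ns_real.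
move=> h.
have hc : ns c <= 0.
  have : lam ^+ 2 * ns c * nn w - 2%:R * (lam * ns c) >= 0 by lra.
  have -> : lam ^+ 2 * ns c * nn w - 2%:R * (lam * ns c) = - (ns c / nn w).
    by rewrite /lam; field; rewrite nw.
  rewrite oppr_ge0 pmulr_lle0 // invr_gt0 //.
apply: ns_eq0; apply/eqP; rewrite eq_le hc ns_ge0 //.
Qed.
End Proj.

Section ProjProps.
Variable K : H -> Prop.
Hypothesis hK : closed_subspace ip K.
Local Notation P := (orth_proj ip K).

Lemma Pspec x : K (P x) /\ forall w, K w -> ip (x - P x) w = 0.
Proof. apply: (epsilon_spec (inhabits 0) (fun k : H => K k /\ (forall w : H, K w -> ip (x - k) w = 0))); exact: proj_exists. Qed.
Lemma PK x : K (P x). Proof. by case: (Pspec x). Qed.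
Lemma Porth x w : K w -> ip (x - P x) w = 0. Proof. by case: (Pspec x) => _; apply. Qed.

Lemma P_uniq x p : K p -> (forall w, K w -> ip (x - p) w = 0) -> P x = p.
Proof.
move=> kp hp; apply/eqP; rewrite -subr_eq0; apply/eqP; apply: ip_def.
have kq : K (P x - p) by apply: KD => //; [exact: PK | rewrite -scaleN1r; exact: KZ].
have -> : ip (P x - p) (P x - p) = ip (x - p) (P x - p) - ip (x - P x) (P x - p).
  have e : x - p - (x - P x) = P x - p by rewrite opprB addrC addrA subrK.
  by rewrite -ipBl e.
by rewrite hp // Porth // subrr.
Qed.

Lemma P_id m : K m -> P m = m.
Proof. by move=> km; apply: P_uniq => // w _; rewrite subrr ip0l. Qed.

Lemma P_lin : linear_op P.
Proof.
move=> a x y; apply: P_uniq; first by apply: Klin => //; exact: PK.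
move=> w kw.
have -> : a *: x + y - (a *: P x + P y) = a *: (x - P x) + (y - P y).
  by rewrite scalerBr opprD addrACA.
by rewrite ip_lin !Porth // mulr0 addr0.
Qed.

Lemma PQ x : P (x - P x) = 0.
Proof. by apply: P_uniq; [exact: K0 | move=> w kw; rewrite subr0 Porth]. Qed.

Lemma Porth' x y : ip (P y) (x - P x) = 0.
Proof. by rewrite ip_sym Porth ?conjc0 //; exact: PK. Qed.

Lemma nnP x : nn x = nn (P x) + nn (x - P x).
Proof.
have := nnD (P x) (x - P x); rewrite addrC subrK => ->.
by rewrite Porth' /= mulr0 addr0.
Qed.
Lemma nnP_le x : nn (P x) <= nn x.
Proof. by rewrite (nnP x) lerDl nn_ge0. Qed.
Lemma hnP_le x : hn (P x) <= hn x.
Proof. by rewrite !hnE ler_sqrt ?nn_ge0 // nnP_le. Qed.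
Lemma Psym a b : ip (P a) b = ip a (P b).
Proof.
have -> : ip (P a) b = ip (P a) (P b) + ip (P a) (b - P b) by rewrite -ipDr addrC subrK.
have -> : ip a (P b) = ip (P a) (P b) + ip (a - P a) (P b) by rewrite -ipDl addrC subrK.
rewrite Porth' Porth; [by rewrite !addr0 | exact: PK].
Qed.
Lemma P_pos b : 0 <= ip (P b) b.
Proof.
have -> : ip (P b) b = ip (P b) (P b) + ip (P b) (b - P b) by rewrite -ipDr addrC subrK.
by rewrite Porth' addr0 ip_pos.
Qed.
Lemma PP x : P (P x) = P x. Proof. by apply: P_id; exact: PK. Qed.
End ProjProps.

Lemma riesz1 T y : bounded_op ip T -> exists v, forall x, ip (T x) y = ip x v.
Proof.
move=> [hT [M hM]].
pose f x := ip (T x) y.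
have fl : forall a x z, f (a *: x + z) = a * f x + f z by move=> a x z; rewrite /f hT ip_lin.
have f0 : f 0 = 0 by rewrite /f lin0 // ip0l.
have fB : forall x z, f (x - z) = f x - f z by move=> x z; rewrite /f linB // ipBl.
pose N x := f x = 0.
have hN : closed_subspace ip N.
  split; first exact: f0.
    by move=> a x z; rewrite /N fl => -> ->; rewrite mulr0 addr0.
  move=> u l hu hl; rewrite /N.
  have hc := conv_lin T M u l hT hM hl.
  apply: ns_eq0; apply: small0; first exact: ns_ge0.
  move=> e e0.
  have ny1 : 0 < nn y + 1 by rewrite ltr_wpDl ?nn_ge0.
  set c := e / (nn y + 1).
  have c0 : 0 < c by rewrite divr_gt0.
  have sc : 0 < Num.sqrt c by rewrite sqrtr_gt0.
  have [n0 hn0] := hc _ sc.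
  have := hn0 n0 (leqnn _); rewrite hn_lt ?sqrtr_gt0 // sqr_sqrtr ?ltW // => h1.
  have -> : f l = - f (u n0 - l) by rewrite fB hu sub0r opprK.
  have := CS (T (u n0) - T l) y.
  rewrite -linB // -/(f _) => h2.
  have nsN : forall a, ns (- a) = ns a by move=> a; rewrite /ns conjN mulrNN.
  rewrite nsN; apply: le_lt_trans h2 _.
  have : c * (nn y + 1) = e by rewrite /c mulfVK // gt_eqF.
  have := nn_ge0 y; have := nn_ge0 (T (u n0 - l)); rewrite linB //; nra.
case: (classic (forall x, f x = 0)) => [hall|].
  by exists 0 => x; rewrite ip0r; exact: hall.
move=> /not_all_ex_not [x1 hx1].
pose PN := orth_proj ip N.
set e := x1 - PN x1.
have fe : f e = f x1 by rewrite /e fB (PK N hN x1) subr0.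
have fe0 : f e != 0 by apply/eqP; rewrite fe.
have ee : ip e e != 0.
  apply/eqP => /ip_def e0; move: fe0; rewrite e0 f0 eqxx //.
exists (conjc (f e / ip e e) *: e) => x.
have hz : N (f x *: e - f e *: x).
  by rewrite /N fB !/f !linZ // !ipZl mulrC subrr.
have : ip (f x *: e - f e *: x) e = 0.
  by rewrite ip_sym (Porth N hN x1 _ hz) conjc0.
rewrite ipBl !ipZl => /eqP; rewrite subr_eq0 => /eqP h.
rewrite ipZr conjK -/(f x).
by apply: (mulIf ee); rewrite h; field.
Qed.

Lemma riesz T : bounded_op ip T -> exists A, forall x y, ip (T x) y = ip x (A y).
Proof.
move=> hT.
exists (fun y => epsilon (inhabits 0) (fun v => forall x, ip (T x) y = ip x v)).
move=> x y.
have := epsilon_spec (inhabits 0) (fun v => forall x, ip (T x) y = ip x v) (riesz1 T y hT).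
by apply.
Qed.

Lemma adj_spec T : bounded_op ip T -> forall x y, ip (T x) y = ip x (adj ip T y).
Proof.
move=> hT; rewrite /adj.
apply: (epsilon_spec (inhabits (fun x : H => x)) (fun A => forall x y, ip (T x) y = ip x (A y))).
exact: riesz.
Qed.

Lemma ip_ext a b : (forall x, ip x a = ip x b) -> a = b.
Proof.
move=> h; apply/eqP; rewrite -subr_eq0; apply/eqP; apply: ip_def.
by rewrite ipBr h subrr.
Qed.

Lemma adj_eq T A : (forall x y, ip (T x) y = ip x (A y)) -> forall y, adj ip T y = A y.
Proof.
move=> hA y; rewrite /adj.
have := epsilon_spec (inhabits (fun x : H => x)) (fun A => forall x y, ip (T x) y = ip x (A y)) (ex_intro _ A hA).
set B := epsilon _ _ => hB.
by apply: ip_ext => x; rewrite -hA -hB.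
Qed.

Section Neumann.
Variables (T : H -> H) (z : R[i]).
Hypothesis hT : linear_op T.
Hypothesis hTn : forall x, nn (T x) <= nn x.
Hypothesis hz : ns z < 1.

Let sz := Num.sqrt (ns z).
Lemma sz_lt1 : sz < 1.
Proof. by rewrite /sz -sqrtr1 ltr_sqrt // ltr01. Qed.
Lemma sz_ge0 : 0 <= sz. Proof. exact: sqrtr_ge0. Qed.
Lemma hnT x : hn (T x) <= hn x.
Proof. by rewrite !hnE ler_sqrt ?nn_ge0 // hTn. Qed.

Let L v := v - z *: T v.
Lemma L_lin : linear_op L.
Proof.
move=> a x y; rewrite /L (hT a x y) scalerDr scalerA mulrC -scalerA.
by rewrite scalerBr opprD addrACA.
Qed.
Lemma L_low w : (1 - sz) * hn w <= hn (L w).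
Proof.
have h1 : hn w <= hn (L w) + hn (z *: T w).
  by apply: le_trans _ (hnD _ _); rewrite /L subrK.
have h2 := hnT w; rewrite hnZ -/sz in h1.
have := sz_ge0; nra.
Qed.
Lemma L_inj w : L w = 0 -> w = 0.
Proof.
move=> h; apply: hn_eq0; have := L_low w; rewrite h hn0 => h1.
have := sz_lt1; have := hn_ge0 w; nra.
Qed.
Lemma L_bd x : hn (L x) <= (1 + sz) * hn x.
Proof.
apply: le_trans (hnD _ _) _; rewrite hnN hnZ -/sz.
have := hnT x; have := sz_ge0; have := hn_ge0 (T x); nra.
Qed.

Lemma L_surj b : exists w, L w = b.
Proof.
pose Rg b := exists w, L w = b.
have hRg : closed_subspace ip Rg.
  split.
  - by exists 0; rewrite /L lin0 // scaler0 subr0.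
  - by move=> a x y [w1 <-] [w2 <-]; exists (a *: w1 + w2); rewrite L_lin.
  move=> u l hu hl.
  pose w n := epsilon (inhabits 0) (fun w => L w = u n).
  have hw : forall n, L (w n) = u n.
    by move=> n; apply: (epsilon_spec (inhabits 0) (fun w => L w = u n)); exact: hu.
  have hc : cauchy_seq ip w.
    move=> e e0.
    have s0 : 0 < 1 - sz by rewrite subr_gt0 sz_lt1.
    have [N hN] := conv_cauchy u l hl _ (mulr_gt0 e0 s0).
    exists N => m n hm hn'.
    have := hN m n hm hn'; rewrite -!hw -linB; last exact: L_lin.
    have := L_low (w m - w n); have := hn_ge0 (w m - w n); nra.
  have [wl hwl] := (match hH with And5 _ _ _ _ c => c end) w hc.
  have := conv_lin L (1 + sz) w wl L_lin L_bd hwl.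
  have -> : (fun n => L (w n)) = u by apply: functional_extensionality => n; exact: hw.
  move=> hl'; exists wl; exact: (conv_uniq u _ _ hl' hl).
pose e := b - orth_proj ip Rg b.
have he : Rg (L e) by exists e.
have h0 : ip e (L e) = 0 by rewrite /e Porth.
have : nn e <= sz * nn e.
  move: h0; rewrite /L ipBr => /eqP; rewrite subr_eq0 => /eqP h0.
  have hre : nn e = complex.Re (ip e (z *: T e)) by rewrite /nn h0.
  rewrite {1}hre -(hn_sq e).
  apply: le_trans (Re_le _ _) _; rewrite hnZ -/sz.
  have := hnT e; have := mulr_ge0 sz_ge0 (hn_ge0 e); nra.
move=> h; have : nn e = 0.
  have := sz_lt1; have := nn_ge0 e; nra.
move/nn_eq0; rewrite /e => /eqP; rewrite subr_eq0 => /eqP ->.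
exact: (PK Rg hRg b).
Qed.
End Neumann.

Lemma pos_re B x : positive_op ip B -> 0 <= complex.Re (ip (B x) x).
Proof. by case=> _ h; have := h x; rewrite lecE /= => /andP[]. Qed.

Lemma sqrt_uniq A : linear_op A -> (forall x, A (A x) = A x) -> positive_op ip A ->
  forall x, op_sqrt ip A x = A x.
Proof.
move=> hA hAA hpA.
have := epsilon_spec (inhabits (fun x : H => x))
  (fun B => positive_op ip B /\ forall x, B (B x) = A x) (ex_intro _ A (conj hpA hAA)).
rewrite -/(op_sqrt ip A); set B := op_sqrt ip A; move=> [hpB hBB].
have hB : linear_op B by case: hpB => [[]].
have ker : forall u, A u = 0 -> B u = 0.
  move=> u hu; set s := B u.
  have hs : B s = 0 by rewrite /s hBB.
  have hpos : forall t : R, 0 <= complex.Re (ip s u) + t * nn s.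
    move=> t; have := pos_re B (u + t%:C%C *: s) hpB.
    by rewrite linD // linZ // hs scaler0 addr0 -/s ipDr ip_scaleC ReD ReCM.
  case: (eqVneq (nn s) 0) => [h0|hn0]; first exact: nn_eq0 _ h0.
  exfalso.
  have ns0 : 0 < nn s by rewrite lt_def hn0 nn_ge0.
  have := hpos (- (`|complex.Re (ip s u)| + 1) / nn s).
  rewrite mulrAC -mulrA divff ?gt_eqF // mulr1.
  have := ler_norm (complex.Re (ip s u)); lra.
have fix1 : forall v, A v = v -> B v = v.
  move=> v hv; set t := B v - v.
  have ht : B t + t = 0.
    rewrite /t (linB B hB) hBB hv addrA subrK subrr //.
  have : complex.Re (ip (B t + t) t) = 0 by rewrite ht ip0l.
  rewrite ipDl ReD -/(nn t) => h.
  have := pos_re B t hpB; have := nn_ge0 t => h1 h2.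
  have : nn t = 0 by lra.
  by move/nn_eq0; rewrite /t => /eqP; rewrite subr_eq0 => /eqP.
move=> x.
have e1 : B (A x) = A x := fix1 _ (hAA x).
have e2 : B (x - A x) = 0 by apply: ker; rewrite (linB A hA) hAA subrr.
have : B (A x + (x - A x)) = A x by rewrite (linD B hB) e1 e2 addr0.
by rewrite addrC subrK.
Qed.
Lemma opinv_spec (f : H -> H) y : (exists x, f x = y) -> f (op_inv (R:=R) (H:=H) f y) = y.
Proof. by move=> h; apply: (epsilon_spec (inhabits 0) (fun x => f x = y)). Qed.
Lemma opinv_on_spec (D : H -> Prop) (f : H -> H) y : (exists x, D x /\ f x = y) ->
  D (op_inv_on (R:=R) (H:=H) D f y) /\ f (op_inv_on (R:=R) (H:=H) D f y) = y.
Proof. by move=> h; apply: (epsilon_spec (inhabits 0) (fun x => D x /\ f x = y)). Qed.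

Lemma ns_lt1 (z : R[i]) : `|z| < 1 -> ns z < 1.
Proof.
move=> hz.
have h2 : `|z| ^+ 2 < 1 by rewrite expr_lt1 // normr_ge0.
rewrite normCK ns_C in h2.
by rewrite -(@ltcR R) .
Qed.
Section Main.
Variables (U : H -> H) (K : H -> Prop).
Hypothesis hU : unitary ip U.
Hypothesis hK : closed_subspace ip K.
Local Notation V := (adj ip U).
Local Notation P := (orth_proj ip K).

Lemma Ub : bounded_op ip U. Proof. by case: hU. Qed.
Lemma Ulin : linear_op U. Proof. by case: Ub. Qed.
Lemma VU x : V (U x) = x. Proof. by case: hU. Qed.
Lemma UV x : U (V x) = x. Proof. by case: hU. Qed.
Lemma adjU x y : ip (U x) y = ip x (V y). Proof. exact: adj_spec Ub x y. Qed.
Lemma ipVl a x : ip (V a) x = ip a (U x).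
Proof. by rewrite ip_sym -adjU -ip_sym. Qed.
Lemma Vlin : linear_op V.
Proof.
move=> a x y; apply: ip_ext => w.
by rewrite -adjU ipDr ipZr !adjU -ipZr -ipDr.
Qed.
Lemma nnV x : nn (V x) = nn x.
Proof. by rewrite /nn ipVl UV. Qed.
Lemma nnV_le x : nn (V x) <= nn x.
Proof. by rewrite nnV. Qed.
Lemma hnV x : hn (V x) = hn x.
Proof. by rewrite !hnE nnV. Qed.
Lemma nnU x : nn (U x) = nn x.
Proof. by rewrite /nn adjU VU. Qed.

Let PsymK := Psym K hK.
Let PQK := PQ K hK.
Let PPK := PP K hK.
Let PposK := P_pos K hK.
Let PlinK := P_lin K hK.
Let hnPK := hnP_le K hK.
Let nnPK := nnP K hK.

Let S x := U x - P (U x).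
Let Tn y := V (y - P y).

Lemma adjS y : adj ip S y = Tn y.
Proof.
apply: adj_eq => x {}y.
by rewrite /S /Tn -adjU ipBl ipBr PsymK.
Qed.

Lemma Tn_lin : linear_op Tn.
Proof.
move=> a x y; rewrite /Tn -(Vlin a) (PlinK a x y).
by congr V; rewrite scalerBr opprD addrACA.
Qed.
Lemma Tn_bd x : nn (Tn x) <= nn x.
Proof. by rewrite /Tn nnV (nnPK x) lerDr nn_ge0. Qed.

Lemma defS : defect ip S = fun x => V (P (U x)).
Proof.
rewrite /defect.
have -> : (fun x => x - adj ip S (S x)) = (fun x => V (P (U x))).
  apply: functional_extensionality => x.
  rewrite adjS /Tn /S PQK subr0 (linB _ Vlin) VU.
  by rewrite opprB addrC subrK.
apply: functional_extensionality => x; apply: sqrt_uniq.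
- move=> a u v; rewrite Ulin PlinK Vlin //.
- by move=> u; rewrite UV PPK.
split.
  split; first by move=> a u v; rewrite Ulin PlinK Vlin.
  have [_ [M hM]] := Ub.
  exists M => u; rewrite hnV; apply: le_trans (hnPK _) (hM u).
by move=> u; rewrite ipVl PposK.
Qed.

Lemma defaS : defect_adj ip S = P.
Proof.
rewrite /defect_adj.
have -> : (fun x => x - S (adj ip S x)) = P.
  apply: functional_extensionality => x.
  rewrite adjS /Tn /S UV PQK subr0.
  by rewrite opprB addrC subrK.
apply: functional_extensionality => x; apply: sqrt_uniq.
- exact: PlinK.
- exact: PPK.
split.
  split; first exact: PlinK.
  by exists 1 => u; rewrite mul1r hnPK.
by move=> u; rewrite PposK.
Qed.
Lemma charS z y : char_fun ip S z y =
  - S y + z *: P (op_inv (R:=R) (H:=H) (fun w => w - z *: Tn w) (V (P (U y)))).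
Proof.
rewrite /char_fun defS defaS.
have -> : (fun y => y - z *: adj ip S y) = (fun w => w - z *: Tn w).
  by apply: functional_extensionality => w; rewrite adjS.
by [].
Qed.

Lemma main z k : `|z| < 1 -> K k ->
  let UK := fun x => exists y, K y /\ x = V y in
  ip (U (op_inv (fun x => U x - z *: x) k) + z *: op_inv (fun x => U x - z *: x) k) k
  = ip (let y := op_inv_on UK (fun x => U x - char_fun ip S z x) k in
        U y + char_fun ip S z y) k.
Proof.
move=> hz hk UK.
have hz' := ns_lt1 _ hz.
set x0 := op_inv _ k.
have hx0 : U x0 - z *: x0 = k.
  apply: (opinv_spec (fun x => U x - z *: x)).
  have [w hw] := L_surj V z Vlin nnV_le hz' (V k).
  exists w; rewrite -(UV k) -hw (linB _ Ulin) (linZ _ Ulin) UV //.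
have Ux0 : U x0 = k + z *: x0 by apply/eqP; rewrite -subr_eq hx0.
have injU : forall a, U a - z *: a = k -> a = x0.
  move=> a ha; apply/eqP; rewrite -subr_eq0; apply/eqP.
  apply: (L_inj V z nnV_le hz').
  have e : U (a - x0) - z *: (a - x0) = 0.
    by rewrite (linB _ Ulin) scalerBr opprD opprK addrACA ha [X in k + X]addrC -opprB hx0 subrr.
  have := congr1 V e; rewrite (lin0 _ Vlin) (linB _ Vlin) (linZ _ Vlin) !VU //.
have wspec : forall y, op_inv (R:=R) (H:=H) (fun w => w - z *: Tn w) y
                     - z *: Tn (op_inv (R:=R) (H:=H) (fun w => w - z *: Tn w) y) = y.
  move=> y; apply: (opinv_spec (fun w => w - z *: Tn w)).
  exact: (L_surj Tn z Tn_lin Tn_bd hz' y).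
have charUK : forall y, UK y ->
    char_fun ip S z y = z *: P (op_inv (R:=R) (H:=H) (fun w => w - z *: Tn w) y).
  move=> y [m [km ->]]; rewrite charS /S !UV (P_id K hK m km) subrr oppr0 add0r //.
set ys := x0 - z *: Tn x0.
have Uys : U ys = z *: P x0 + k.
  rewrite /ys /Tn (linB _ Ulin) (linZ _ Ulin) UV scalerBr opprB addrCA hx0 //.
have UKys : UK ys.
  exists (U ys); split; last by rewrite VU.
  rewrite Uys; apply: (Klin K hK) => //; exact: (PK K hK).
have ex : exists x, UK x /\ U x - char_fun ip S z x = k.
  exists ys; split => //.
  rewrite charUK //.
  set ws := op_inv _ ys.
  have wsx : ws = x0.
    apply/eqP; rewrite -subr_eq0; apply/eqP.
    apply: (L_inj Tn z Tn_bd hz').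
    have hws := wspec ys; rewrite -/ws in hws.
    by rewrite (linB _ Tn_lin) scalerBr opprD opprK addrACA hws [X in ys + X]addrC -opprB subrr.
  by rewrite wsx Uys (addrC _ k) addrK.
have [hy1 hy2] := opinv_on_spec UK (fun x => U x - char_fun ip S z x) k ex.
rewrite /=.
set y := op_inv_on _ _ k in hy1 hy2 *.
rewrite charUK // in hy2 *.
set w := op_inv _ y in hy2 *.
have hw := wspec y; rewrite -/w in hw.
have Uy : U y = k + z *: P w by apply/eqP; rewrite -subr_eq hy2.
have wx : w = x0.
  apply: injU.
  have := congr1 U hw; rewrite (linB _ Ulin) (linZ _ Ulin) /Tn UV Uy.
  rewrite scalerBr opprB => /eqP; rewrite -subr_eq => /eqP <-.
  by rewrite addrCA (addrC (z *: P w)) addrK.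
rewrite Uy wx Ux0 !ipDl !ipZl (PsymK x0 k) (P_id K hK k hk) //.
Qed.
End Main.
End Hil.

Theorem theorem3p1 (R : realType) (H : lmodType R[i]) (ip : H -> H -> R[i])
  (hH : is_hilbert ip) (U : H -> H) (hU : unitary ip U)
  (K : H -> Prop) (hK : closed_subspace ip K)
  (z : R[i]) (hz : `|z| < 1) (k : H) (hk : K k) :
  let P := orth_proj ip K in
  let S := fun x => U x - P (U x) in
  let UK := fun x => exists y, K y /\ x = adj ip U y in
  ip (U (op_inv (fun x => U x - z *: x) k) + z *: op_inv (fun x => U x - z *: x) k) k
  = ip (let y := op_inv_on UK (fun x => U x - char_fun ip S z x) k in
        U y + char_fun ip S z y) k.
Proof.
move=> P S UK.
exact: (@main R H ip hH U K hU hK z k hz hk).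
Qed.
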